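(* Let $L\ge1$ be an integer, $\gamma\in(0,1)$, $r\in[0,\frac{L}{L+1})$ and $n\in\mathbb{N}$ with $rn\in\mathbb{N}$. There exists $q(n,r,L,\gamma)$ such that for every $q\ge q(n,r,L,\gamma)$ the following holds: if $\epsilon\ge0$ is an integer with $(L-1)(\epsilon+1)\le\lfloor rn/L\rfloor$ and $C\subseteq[q]^n$ is an $(r,L)$ list-decodable code with $|C|=q^{\,n-\lfloor\frac{L+1}{L}rn\rfloor-\epsilon}$, then $C$ contains a subcode $C'\subseteq C$ with $|C'|\ge\gamma|C|$ and minimum distance at least $\lfloor\frac{L+1}{L}rn\rfloor-(L-1)(\epsilon+1)+1$.
   Context: $[q]=\{1,\dots,q\}$; a code is a subset of $[q]^n$, its minimum distance is the minimum Hamming distance (number of differing coordinates) between distinct codewords. $C$ is $(r,L)$ list-decodable if every Hamming ball of radius $rn$ in $[q]^n$ contains at most $L$ codewords. *)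

(* Defs.v *)
From HB Require Import structures.
From mathcomp Require Import all_boot all_order all_algebra.
From mathcomp Require Import reals.
Set Implicit Arguments. Unset Strict Implicit. Unset Printing Implicit Defensive.
Import Order.TTheory GRing.Theory Num.Theory.
Local Open Scope ring_scope.

Definition word (q n : nat) := {ffun 'I_n -> 'I_q}.

Definition hamming (q n : nat) (x y : word q n) : nat :=
  #|[set i : 'I_n | x i != y i]|.

Definition list_decodable (R : realType) (q n : nat) (C : {set word q n})
    (r : R) (L : nat) : Prop :=
  forall y : word q n,
    (#|[set c in C | ((hamming c y)%:R <= r * n%:R)%R]| <= L)%N.

Definition min_dist_ge (q n : nat) (C : {set word q n}) (d : int) : Prop :=
  forall c1 c2, c1 \in C -> c2 \in C -> c1 != c2 -> d <= (hamming c1 c2)%:Z.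

(* Main.v *)
Require Import Defs.
From HB Require Import structures.
From mathcomp Require Import all_boot all_order all_algebra.
From mathcomp Require Import reals.
From mathcomp Require Import zify lra.
Import Order.TTheory GRing.Theory Num.Theory.
Set Implicit Arguments. Unset Strict Implicit. Unset Printing Implicit Defensive.

Lemma subset_size (T : finType) (A : {set T}) m :
  (m <= #|A|)%N -> exists2 B : {set T}, B \subset A & #|B| = m.
Proof.
move/card_geqP=> [s [us ss sA]]; exists [set x in s].
  by apply/subsetP=> x; rewrite inE => /sA.
by rewrite cardsE (card_uniqP us).
Qed.

Lemma leq_card_bigcup (I T : finType) (P : pred I) (F : I -> {set T}) :
  (#|\bigcup_(i | P i) F i| <= \sum_(i | P i) #|F i|)%N.
Proof.
apply: (big_ind2 (fun (A : {set T}) (m : nat) => #|A| <= m)%N).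
- by rewrite cards0.
- move=> A a B b hA hB; apply: leq_trans (leq_card_setU A B) _; exact: leq_add.
- by [].
Qed.

Lemma build_y q n (S : {set 'I_n}) (base : word q n) (ws : seq (word q n * nat)) :
  (\sum_(w <- ws) w.2 <= #|S|)%N ->
  exists y : word q n, (forall i, i \notin S -> y i = base i) /\
    forall w, w \in ws -> (w.2 <= #|[set i in S | y i == w.1 i]|)%N.
Proof.
elim: ws S => [|w ws IH] S /=.
  by move=> _; exists base; split.
rewrite big_cons => hs.
have [T TS cT] := subset_size (leq_trans (leq_addr _ _) hs : (w.2 <= #|S|)%N).
have hs' : (\sum_(w <- ws) w.2 <= #|S :\: T|)%N.
  by rewrite cardsDS // cT leq_subRL ?(leq_trans (leq_addr _ _) hs).
have [y' [y'out y'in]] := IH _ hs'.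
exists [ffun i => if i \in T then w.1 i else y' i]; split.
  move=> i iS; rewrite ffunE.
  have iT : i \notin T by apply: contra iS; apply: (subsetP TS).
  by rewrite (negbTE iT) y'out // inE negb_and iS orbT.
move=> w'; rewrite inE => /orP [/eqP -> | w'ws].
  rewrite -cT; apply: subset_leq_card; apply/subsetP=> i iT.
  by rewrite inE (subsetP TS) //= ffunE iT.
apply: leq_trans (y'in _ w'ws) _; apply: subset_leq_card; apply/subsetP=> i.
rewrite !inE ffunE => /andP [/andP [iT iS] e].
by rewrite iS (negbTE iT).
Qed.
Definition agreeP q n (P : {set 'I_n}) (c c' : word q n) := [forall i in P, c i == c' i].

Definition small q n (C : {set word q n}) (P : {set 'I_n}) L :=
  [set c in C | (#|[set c' in C | agreeP P c c']| <= L)%N].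

Lemma small_card q n (C : {set word q n}) (P : {set 'I_n}) L :
  (#|small C P L| <= q ^ #|P| * L)%N.
Proof.
pose proj (c : word q n) : {ffun 'I_#|P| -> 'I_q} := [ffun j => c (enum_val j)].
rewrite -sum1_card (partition_big proj predT) //=.
have -> : q ^ #|P| = #|{ffun 'I_#|P| -> 'I_q}| by rewrite card_ffun !card_ord.
rewrite -sum_nat_const; apply: leq_sum => v _.
case: (pickP [pred c | (c \in small C P L) && (proj c == v)]) => [c0 /= /andP [c0s /eqP pc0]|none].
  rewrite sum1_card; move: (c0s); rewrite inE => /andP [c0C c0L].
  apply: leq_trans c0L; apply: subset_leq_card; apply/subsetP => c /andP [cs /eqP pc].
  move: (cs); rewrite inE => /andP [cC _].
  rewrite inE cC /=; apply/forallP => i; apply/implyP => iP.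
  have := congr1 (fun f : {ffun _} => f (enum_rank_in iP i)) (etrans pc0 (esym pc)).
  by rewrite !ffunE enum_rankK_in // => ->.
rewrite big1 // => c /andP [cs pc]; have := none c; by rewrite /= cs pc.
Qed.
Lemma bad_small q n (C : {set word q n}) L k D p g h :
  (1 <= L)%N ->
  (forall y : word q n, #|[set c in C | (hamming c y <= k)%N]| <= L)%N ->
  D = (k + g)%N -> n = (p + k + h)%N -> (p + D <= n)%N ->
  (2 * g + (L - 1) * h <= D)%N ->
  forall c1 c2, c1 \in C -> c2 \in C -> c1 != c2 -> (hamming c1 c2 <= D)%N ->
  exists2 P : {set 'I_n}, #|P| = p & c1 \in small C P L.
Proof.
move=> L1 ld eD en pDn sumD c1 c2 c1C c2C c12 hD.
pose Ag := [set i | c1 i == c2 i].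
have cAg : #|Ag| = (n - hamming c1 c2)%N.
  have := cardsC Ag; rewrite card_ord /hamming.
  have -> : ~: Ag = [set i | c1 i != c2 i] by apply/setP => i; rewrite !inE.
  by move/(congr1 (subn^~ #|[set i | c1 i != c2 i]|)); rewrite addnK.
have [Y YAg cY] := @subset_size _ Ag (n - D) ltac:(rewrite cAg; lia).
have [P PY cP] := @subset_size _ Y p ltac:(rewrite cY; lia).
exists P => //.
rewrite inE c1C /=; rewrite leqNgt; apply/negP => FL.
set F := [set c' in C | agreeP P c1 c'] in FL.
have : (L - 1 <= #|F :\ c1 :\ c2|)%N.
  have := cardsD1 c1 F; have := cardsD1 c2 (F :\ c1).
  case: (c1 \in F); case: (c2 \in F :\ c1) => /=; lia.
move/card_geqP => [s [us ss sF]].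
pose S := ~: Y.
have cS : #|S| = D by rewrite /S; have := cardsC Y; rewrite card_ord cY; lia.
pose ws := (c1, g) :: (c2, g) :: [seq (d, h) | d <- s].
have hws : (\sum_(w <- ws) w.2 <= #|S|)%N.
  rewrite !big_cons big_map big_const_seq count_predT iter_addn_0 ss cS /=; rewrite mulnC; lia.
have [y [yout yin]] := build_y c1 hws.
have SY i : i \notin S -> i \in Y by rewrite inE negbK.
have PS i : i \in P -> i \notin S by move=> iP; rewrite inE negbK (subsetP PY).
have dist12 (c : word q n) : (forall i, i \notin S -> c i = c1 i) -> (c, g) \in ws ->
    (hamming c y <= k)%N.
  move=> cout cin; have := yin _ cin => /= hc.
  rewrite /hamming.
  apply: leq_trans (subset_leq_card (_ : _ \subset S :\: [set i in S | y i == c i])) _.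
    apply/subsetP => i; rewrite !inE => ne.
    case iY: (i \in Y).
      by move: ne; rewrite yout ?inE ?iY // cout ?inE ?iY // eqxx.
    by rewrite /= andbT eq_sym.
  rewrite cardsDS; last by apply/subsetP => i; rewrite inE => /andP [].
  rewrite cS; apply: leq_trans (leq_sub2l D hc) _; by rewrite eD addnK.
have ball : c1 |: (c2 |: [set d in s]) \subset [set c in C | (hamming c y <= k)%N].
  apply/subsetP => c; rewrite !inE => /orP [/eqP -> | /orP [/eqP -> | cs]].
  - rewrite c1C /=; apply: dist12 => //; by rewrite inE eqxx.
  - rewrite c2C /=; apply: dist12; last by rewrite !inE eqxx orbT.
    move=> i /SY iY; have := subsetP YAg _ iY; rewrite inE => /eqP ->. done.
  - have := sF _ cs; rewrite !inE => /andP [_ /andP [_ /andP [cC cag]]].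
    rewrite cC /=.
    have cin : (c, h) \in ws by rewrite !inE; apply/orP; right; apply/orP; right;
      apply/mapP; exists c.
    have := yin _ cin => /= hc.
    rewrite /hamming.
    apply: leq_trans (subset_leq_card (_ : _ \subset ~: P :\: [set i in S | y i == c i])) _.
      apply/subsetP => i; rewrite !inE => ne.
      case iP: (i \in P); last first.
        by rewrite andbT eq_sym (negbTE ne) andbF.
      move: ne; rewrite yout ?PS //.
      by move/forallP: cag => /(_ i); rewrite iP /= => /eqP ->; rewrite eqxx.
    rewrite cardsDS; last first.
      apply/subsetP => i; rewrite !inE => /andP [iS _]; apply/negP => iP.
      by move: (PS _ iP); rewrite inE iS.
    have cP' : #|~: P| = (k + h)%N by have := cardsC P; rewrite card_ord cP; lia.
    rewrite cP'; apply: leq_trans (leq_sub2l _ hc) _; by rewrite addnK.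
have := subset_leq_card ball; have := ld y.
have cs : #|[set d in s]| = (L - 1)%N by rewrite -ss -(card_uniqP us); exact: cardsE.
rewrite cardsU1 cardsU1 cs.
have -> : c1 \notin c2 |: [set d in s].
  rewrite !inE negb_or c12 /=; apply/negP => /sF; rewrite !inE; by rewrite eqxx /= andbF.
have -> : c2 \notin [set d in s] by rewrite inE; apply/negP => /sF; rewrite !inE eqxx.
simpl; lia.
Qed.

Local Open Scope ring_scope.
Lemma floor_frac (R : realType) (a b c : nat) : (0 < b)%N ->
  (c * b <= a < (c + 1) * b)%N -> Num.floor (a%:R / b%:R : R) = c%:Z.
Proof.
move=> b0 /andP [h1 h2]; apply: floor_def.
have bR : (0 : R) < b%:R by rewrite ltr0n.
rewrite -PoszD; rewrite /intmul.
rewrite ler_pdivlMr // ltr_pdivrMr // -!natrM ler_nat ltr_nat.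
by rewrite h1 h2.
Qed.

Unset Implicit Arguments.
Set Strict Implicit.

Theorem theorem6p1 (R : realType) (L : nat) (gamma r : R) (n : nat) :
  (1 <= L)%N ->
  0 < gamma < 1 ->
  0 <= r -> r < L%:R / (L.+1)%:R ->
  (exists k : nat, r * n%:R = k%:R) ->
  exists q0 : nat, forall q : nat, (q0 <= q)%N ->
    forall (eps : nat) (C : {set word q n}),
      ((L - 1) * (eps + 1))%:Z <= Num.floor (r * n%:R / L%:R) ->
      list_decodable C r L ->
      #|C|%:R = (q%:R : R) ^ (n%:Z - Num.floor ((L.+1)%:R / L%:R * (r * n%:R)) - eps%:Z) ->
      exists C' : {set word q n},
        [/\ C' \subset C,
            gamma * #|C|%:R <= #|C'|%:R
          & min_dist_ge C'
              (Num.floor ((L.+1)%:R / L%:R * (r * n%:R)) - ((L - 1) * (eps + 1))%:Z + 1)].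
Proof.
move=> L1 /andP [g0 g1] r0 rL [k rk].
pose K := (#|{set 'I_n}| * L)%N.
pose q0 := maxn 2 (Num.Def.archi_bound (K%:R / (1 - gamma) : R)).
exists q0 => q qq0 eps C hfl ld hC.
have q2 : (2 <= q)%N by apply: leq_trans qq0; rewrite leq_maxl.
have Kq : (K%:R : R) <= (1 - gamma) * q%:R.
  have g1' : 0 < 1 - gamma by rewrite subr_gt0.
  have := @archi_boundP R (K%:R / (1 - gamma)) ltac:(by apply: divr_ge0; [rewrite ler0n | apply: ltW]).
  move=> /ltW hb; rewrite mulrC -ler_pdivrMr //; apply: le_trans hb _.
  by rewrite ler_nat; apply: leq_trans qq0; rewrite leq_maxr.
pose f := (k %/ L)%N.
have L0 : (0 < L)%N by [].
have hf : Num.floor (r * n%:R / L%:R) = f%:Z.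
  rewrite rk; apply: floor_frac => //.
  have := divn_eq k L; have := ltn_pmod k L0; rewrite -/f; nia.
have ht : Num.floor ((L.+1)%:R / L%:R * (r * n%:R)) = (k + f)%:Z.
  rewrite rk mulrAC -natrM; apply: floor_frac => //.
  have := divn_eq k L; have := ltn_pmod k L0; rewrite -/f; nia.
rewrite ht in hC *; rewrite hf in hfl; move: hfl; rewrite lez_nat => hfl.
have ld' : forall y : word q n, (#|[set c in C | (hamming c y <= k)%N]| <= L)%N.
  move=> y; have := ld y.
  have -> : [set c in C | (hamming c y)%:R <= r * n%:R] = [set c in C | (hamming c y <= k)%N].
    by apply/setP => c; rewrite !inE rk ler_nat.
  by [].
case: (leqP #|C| 1) => C1.
  exists C; split => //.
    rewrite ler_piMl ?ler0n //; exact: ltW.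
  move=> c1 c2 c1C c2C c12; exfalso.
  have : (1 < #|C|)%N by apply/card_gt1P; exists c1, c2.
  by rewrite ltnNge C1.
have qR0 : (0 : R) < q%:R by rewrite ltr0n; apply: leq_trans q2.
have N1 : 1 <= n%:Z - (k + f)%:Z - eps%:Z.
  rewrite leNgt; apply/negP => N0.
  set N := (n%:Z - _ - _) in N0 hC.
  have N0' : N <= 0 by lia.
  have eN : N = - (`|N|%N)%:Z by rewrite abszE ler0_norm ?opprK.
  have : (#|C|%:R : R) <= 1.
    rewrite hC eN -exprnN invr_le1.
    - by apply: exprn_ege1; rewrite ler1n; apply: leq_trans q2.
    - by rewrite unitfE expf_neq0 // gt_eqF.
    - by apply: exprn_gt0.
  by rewrite -[X in _ <= X]/(1%:R) ler_nat leqNgt C1.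
pose p := (n - (k + f) - eps).-1.
have ep : n%:Z - (k + f)%:Z - eps%:Z = p.+1%:Z by rewrite /p; lia.
rewrite ep -exprnP in hC.
pose a := ((L - 1) * (eps + 1))%N.
pose D := (k + f - a)%N.
pose g := (f - a)%N.
pose h := (f + eps + 1)%N.
have Lf : (f * L <= k)%N by apply: leq_trunc_div.
have eh : ((L - 1) * h = (L - 1) * f + a)%N by rewrite /h /a -addnA mulnDr.
have eLf : ((L - 1) * f + f = L * f)%N by rewrite -{2}(mul1n f) -mulnDl subnK.
have hD : D = (k + g)%N by rewrite /D /g; lia.
have hn : n = (p + k + h)%N by rewrite /h; move: ep; rewrite /p; lia.
have hpD : (p + D <= n)%N by rewrite hn /D /h; lia.
have hsum : (2 * g + (L - 1) * h <= D)%N by rewrite eh /g /D; rewrite mulnC in Lf; lia.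
pose Bad := [set c1 in C | [exists c2 in C, (c2 != c1) && (hamming c1 c2 <= D)%N]].
have BadC : Bad \subset C by apply/subsetP => c; rewrite inE => /andP [].
have Bad_le : (#|Bad| <= K * q ^ p)%N.
  have sub : Bad \subset \bigcup_(P : {set 'I_n} | #|P| == p) small C P L.
    apply/subsetP => c1; rewrite inE => /andP [c1C /existsP [c2 /andP [c2C /andP [c21 hd]]]].
    have [P cP Ps] := bad_small L1 ld' hD hn hpD hsum c1C c2C (ltac:(by rewrite eq_sym)) hd.
    by apply/bigcupP; exists P; rewrite ?cP.
  apply: leq_trans (subset_leq_card sub) _.
  apply: leq_trans (leq_card_bigcup _ _) _.
  have hs : (\sum_(P : {set 'I_n} | #|P| == p) #|small C P L| <= \sum_(P : {set 'I_n} | #|P| == p) q ^ p * L)%N.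
    by apply: leq_sum => P /eqP <-; apply: small_card.
  apply: leq_trans hs _.
  rewrite sum_nat_const /K -mulnA [(L * _)%N]mulnC; apply: leq_mul => //.
  exact: max_card.
exists (C :\: Bad); split.
- exact: subsetDl.
- rewrite cardsDS // natrB ?subset_leq_card // hC exprS.
  have : (#|Bad|%:R : R) <= K%:R * q%:R ^+ p by rewrite -natrX -natrM ler_nat.
  have : (0 : R) <= q%:R ^+ p by apply: exprn_ge0; apply: ltW.
  move: (q%:R ^+ p) (#|Bad|%:R : R) => X B hX hB.
  have : K%:R * X <= (1 - gamma) * q%:R * X by apply: ler_wpM2r.
  nra.
- move=> c1 c2; rewrite !inE => /andP [c1B c1C] /andP [_ c2C] c12.
  have : ~~ (hamming c1 c2 <= D)%N.
    apply: contra c1B => hd; rewrite c1C /=; apply/existsP; exists c2.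
    by rewrite c2C eq_sym c12.
  rewrite -ltnNge /D /a => hd.
  rewrite /a in hfl; lia.
Qed.
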